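(* Let $(\alpha_k)_{k=0}^\infty$ be a strictly decreasing sequence of positive numbers, and let $g\in D(A^{\alpha_0})$ with $Q_ng\ne0$ for all $n$. (a) Set $\tilde\Gamma_{k,n}=\|Q_ng\|_{D(A^{\alpha_{k-1}})}$, $w_k=0$ and $\tilde w_{k,n}=-Q_ng/\tilde\Gamma_{k,n}$ for $k,n\ge1$. Then $P_ng\approx g+\sum_{k=1}^\infty\tilde\Gamma_{k,n}\cdot0$ is a degenerate expansion in the nested family $\mathcal Z=(D(A^{\alpha_k}))_{k=0}^\infty$ (with remainders $\tilde w_{k,n}$), and moreover $\|\tilde w_{k,n}\|_{D(A^{\alpha_{k-1}})}=1$ for all $k,n$. (b) Let $\beta=\inf_k\alpha_k$ and $s\in[0,\beta]$. Set $\Gamma_{k,n}=\|Q_ng\|_{D(A^{\alpha_k})}$ and $w_{k,n}=-Q_ng/\Gamma_{k,n}$. Then $P_ng\approx g+\sum_{k=1}^\infty\Gamma_{k,n}\cdot0$ is a degenerate expansion in $D(A^s)$ (with remainders $w_{k,n}$).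
   Context: $A$ is the Stokes operator (periodic or no-slip, three-dimensional) with eigenvalues $0<\lambda_1\le\lambda_2\le\cdots\to\infty$ and orthonormal eigenbasis $\{\varphi_j\}$ of the space $H$; $D(A^\alpha)=\{\sum c_j\varphi_j:\sum\lambda_j^{2\alpha}|c_j|^2<\infty\}$ with norm $\|u\|_{D(A^\alpha)}=(\sum\lambda_j^{2\alpha}|c_j|^2)^{1/2}$; $P_n$ is the orthogonal projection onto $\mathrm{span}\{\varphi_1,\ldots,\varphi_n\}$ and $Q_n=I-P_n$. Expansions: for nested normed spaces $Z_0\subset Z_1\subset\cdots$ with continuous embeddings, a degenerate expansion $v_n\approx v+\sum_{k=1}^\infty\Gamma_{k,n}w_k$ of a sequence $(v_n)\subset Z_0$ means: $v\in Z_0$, $w_k\in Z_k$, $w_{k,n}\in Z_{k-1}$, $\Gamma_{k,n}>0$ for all $n,k\ge1$ with $\Gamma_{1,n}\to0$, $\Gamma_{k+1,n}/\Gamma_{k,n}\to0$ and $\|w_{k,n}-w_k\|_{Z_k}\to0$ for each $k$, $v_n=v+\sum_{j=1}^{k-1}\Gamma_{j,n}w_j+\Gamma_{k,n}w_{k,n}$ for all $n,k$, and either $w_k=0$ for all $k$, or for some $N\ge1$, $\|w_k\|_{Z_k}=1$ for $k\le N$ and $w_k=0$ for $k>N$. ''In a normed space $Z$'' means $Z_k=Z$ for all $k$. *)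

(* Defs.v *)
From Stdlib Require Import Reals.
From Coquelicot Require Import Coquelicot.
Open Scope R_scope.

(* Elements of H are represented by their coefficient sequences w.r.t. the
   orthonormal eigenbasis: c j is the coefficient of phi_{j+1}. *)
Definition elt := nat -> R.

Definition ezero : elt := fun _ => 0.
Definition eadd (a b : elt) : elt := fun j => a j + b j.
Definition esub (a b : elt) : elt := fun j => a j - b j.
Definition escale (r : R) (a : elt) : elt := fun j => r * a j.

(* Eigenvalues lam j = lambda_{j+1} of the Stokes operator:
   0 < lambda_1 <= lambda_2 <= ... -> +oo. *)
Definition stokes_eigen (lam : nat -> R) : Prop :=
  0 < lam 0%nat /\ (forall j, lam j <= lam (S j)) /\ is_lim_seq lam p_infty.

Definition DA_term (lam : nat -> R) (a : R) (c : elt) (j : nat) : R :=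
  Rpower (lam j) (2 * a) * (c j) ^ 2.

Definition inDA (lam : nat -> R) (a : R) (c : elt) : Prop :=
  ex_series (DA_term lam a c).

Definition normDA (lam : nat -> R) (a : R) (c : elt) : R :=
  sqrt (Series (DA_term lam a c)).

Definition Pn (n : nat) (c : elt) : elt :=
  fun j => if Nat.ltb j n then c j else 0.
Definition Qn (n : nat) (c : elt) : elt :=
  fun j => if Nat.ltb j n then 0 else c j.

Fixpoint psum (Gam : nat -> nat -> R) (w : nat -> elt) (n m : nat) : elt :=
  match m with
  | O => ezero
  | S m' => eadd (psum Gam w n m') (escale (Gam (S m') n) (w (S m')))
  end.

(* Degenerate expansion v_n ≈ v + sum_k Gam_{k,n} w_k in the nested family
   (Z_k) with membership Zmem k and norm Znorm k, remainders wkn k n.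
   Indices k, n range over k, n >= 1. *)
Definition degenerate_expansion (Zmem : nat -> elt -> Prop)
  (Znorm : nat -> elt -> R) (vn : nat -> elt) (v : elt) (w : nat -> elt)
  (wkn : nat -> nat -> elt) (Gam : nat -> nat -> R) : Prop :=
  Zmem 0%nat v /\
  (forall k, (1 <= k)%nat -> Zmem k (w k)) /\
  (forall k n, (1 <= k)%nat -> (1 <= n)%nat -> Zmem (k - 1)%nat (wkn k n)) /\
  (forall k n, (1 <= k)%nat -> (1 <= n)%nat -> 0 < Gam k n) /\
  is_lim_seq (fun n => Gam 1%nat n) 0 /\
  (forall k, (1 <= k)%nat -> is_lim_seq (fun n => Gam (S k) n / Gam k n) 0) /\
  (forall k, (1 <= k)%nat -> is_lim_seq (fun n => Znorm k (esub (wkn k n) (w k))) 0) /\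
  (forall n k, (1 <= n)%nat -> (1 <= k)%nat ->
     vn n = eadd (eadd v (psum Gam w n (k - 1))) (escale (Gam k n) (wkn k n))) /\
  ((forall k, (1 <= k)%nat -> w k = ezero) \/
   exists N, (1 <= N)%nat /\
     (forall k, (1 <= k)%nat -> (k <= N)%nat -> Znorm k (w k) = 1) /\
     (forall k, (N < k)%nat -> w k = ezero)).

(* Main.v *)
Require Import Defs.
From Stdlib Require Import Reals Lra Lia FunctionalExtensionality Classical.
From Coquelicot Require Import Coquelicot.
Open Scope R_scope.

Lemma exp_le' x y : x <= y -> exp x <= exp y.
Proof. intros [H|H]. left; now apply exp_increasing. right; now subst. Qed.

Lemma lam_mono (lam : nat -> R) : (forall j, lam j <= lam (S j)) ->
  forall m j, (m <= j)%nat -> lam m <= lam j.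
Proof. intros H m j Hmj. induction Hmj. lra. specialize (H m0). lra. Qed.

Lemma DA_nonneg lam a c j : 0 <= DA_term lam a c j.
Proof. unfold DA_term, Rpower. apply Rmult_le_pos. left; apply exp_pos.
  rewrite <- Rsqr_pow2. apply Rle_0_sqr. Qed.

Lemma pow_cmp lam a b m j : 0 < lam 0%nat -> (forall j, lam j <= lam (S j)) ->
  a <= b -> (m <= j)%nat ->
  Rpower (lam j) (2*a) <= Rpower (lam m) (2*(a-b)) * Rpower (lam j) (2*b).
Proof.
  intros H0 Hm Hab Hmj.
  assert (Hp : 0 < lam m) by (apply Rlt_le_trans with (lam 0%nat); auto; apply lam_mono; auto; lia).
  assert (Hl : lam m <= lam j) by (apply lam_mono; auto).
  replace (2*a) with (2*(a-b) + 2*b) by ring. rewrite Rpower_plus.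
  apply Rmult_le_compat_r. unfold Rpower; left; apply exp_pos.
  unfold Rpower. apply exp_le'. apply Rmult_le_compat_neg_l. lra.
  apply ln_le; auto.
Qed.

Lemma Qn0 c : Qn 0 c = c.
Proof. apply functional_extensionality; intro j. unfold Qn. destruct j; reflexivity. Qed.

Lemma term_cmp lam a b m c j : 0 < lam 0%nat -> (forall j, lam j <= lam (S j)) ->
  a <= b ->
  DA_term lam a (Qn m c) j <= Rpower (lam m) (2*(a-b)) * DA_term lam b (Qn m c) j.
Proof.
  intros H0 Hm Hab. unfold DA_term, Qn.
  destruct (Nat.ltb j m) eqn:E.
  - simpl. rewrite !Rmult_0_l, !Rmult_0_r. lra.
  - apply Nat.ltb_ge in E. rewrite <- Rmult_assoc. apply Rmult_le_compat_r.
    rewrite <- Rsqr_pow2. apply Rle_0_sqr. apply pow_cmp; auto.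
Qed.

Lemma ex_series_R (a b : nat -> R) : (forall n, 0 <= a n <= b n) -> ex_series b -> ex_series a.
Proof. intros H Hb. apply (ex_series_le (K:=R_AbsRing) (V:=R_CompleteNormedModule)) with b; auto.
  intro n. change (norm (a n)) with (Rabs (a n)). rewrite Rabs_pos_eq; apply H. Qed.

Lemma inDA_mono lam a b c : 0 < lam 0%nat -> (forall j, lam j <= lam (S j)) ->
  a <= b -> inDA lam b c -> inDA lam a c.
Proof.
  intros H0 Hm Hab Hb. unfold inDA in *.
  apply ex_series_R with (fun j => Rpower (lam 0%nat) (2*(a-b)) * DA_term lam b c j).
  intro n. split. apply DA_nonneg. rewrite <- (Qn0 c). apply term_cmp; auto.
  apply (ex_series_scal_l (K:=R_AbsRing) (V:=R_NormedModule)). exact Hb.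
Qed.

Lemma inDA_Qn lam a c n : inDA lam a c -> inDA lam a (Qn n c).
Proof.
  intros H. unfold inDA in *. apply ex_series_R with (DA_term lam a c); auto.
  intro j. split. apply DA_nonneg. unfold DA_term, Qn. destruct (Nat.ltb j n).
  simpl. rewrite Rmult_0_l, Rmult_0_r. apply DA_nonneg. lra.
Qed.

Lemma Series_nonneg (a : nat -> R) : (forall n, 0 <= a n) -> ex_series a -> 0 <= Series a.
Proof. intros H Ha. replace 0 with (Series (fun n => 0 * a n)).
  apply Series_le; auto. intro n; rewrite Rmult_0_l; split; [lra|auto].
  rewrite Series_scal_l; ring. Qed.

Lemma sum_ge_term (a : nat -> R) j : (forall n, 0 <= a n) -> a j <= sum_f_R0 a j.
Proof. intros H. destruct j. simpl; lra. simpl.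
  assert (0 <= sum_f_R0 a j) by (apply cond_pos_sum; auto). lra. Qed.

Lemma Series_pos (a : nat -> R) j : (forall n, 0 <= a n) -> ex_series a -> 0 < a j -> 0 < Series a.
Proof. intros H Ha Hj. rewrite (Series_incr_n a (S j)) by (auto; lia). simpl pred.
  assert (0 <= Series (fun k => a (S j + k)%nat)).
  { apply Series_nonneg; auto. now apply ex_series_incr_n. }
  pose proof (sum_ge_term a j H). lra. Qed.

Lemma Qn_nz n c : Qn n c <> ezero -> exists j, (n <= j)%nat /\ c j <> 0.
Proof. intros H. apply NNPP; intro Hn. apply H. apply functional_extensionality; intro j.
  unfold Qn, ezero. destruct (Nat.ltb j n) eqn:E; auto. apply Nat.ltb_ge in E.
  apply NNPP; intro Hc. apply Hn. exists j; auto. Qed.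

Lemma S_pos lam a n c : inDA lam a c -> Qn n c <> ezero -> 0 < Series (DA_term lam a (Qn n c)).
Proof. intros Ha Hq. destruct (Qn_nz n c Hq) as [j [Hj Hc]].
  apply Series_pos with j. intro; apply DA_nonneg. apply inDA_Qn; auto.
  unfold DA_term, Qn. replace (Nat.ltb j n) with false by (symmetry; apply Nat.ltb_ge; auto).
  apply Rmult_lt_0_compat. unfold Rpower; apply exp_pos.
  rewrite <- Rsqr_pow2. apply Rsqr_pos_lt; auto. Qed.

Lemma norm_pos lam a n c : inDA lam a c -> Qn n c <> ezero -> 0 < normDA lam a (Qn n c).
Proof. intros; apply sqrt_lt_R0, S_pos; auto. Qed.

Lemma S_ratio lam a b m c : 0 < lam 0%nat -> (forall j, lam j <= lam (S j)) ->
  a <= b -> inDA lam b c ->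
  Series (DA_term lam a (Qn m c)) <= Rpower (lam m) (2*(a-b)) * Series (DA_term lam b (Qn m c)).
Proof. intros. rewrite <- Series_scal_l. apply Series_le.
  intro; split; [apply DA_nonneg| apply term_cmp; auto].
  apply (ex_series_scal_l (K:=R_AbsRing) (V:=R_NormedModule)). apply inDA_Qn; auto. Qed.

Lemma tail lam a c : inDA lam a c -> is_lim_seq (fun n => Series (DA_term lam a (Qn n c))) 0.
Proof.
  intros H. apply is_lim_seq_incr_1.
  apply is_lim_seq_ext with (fun n => Series (DA_term lam a c) - sum_f_R0 (DA_term lam a c) n).
  - intro n. set (b := DA_term lam a (Qn (S n) c)).
    assert (Hb : ex_series b) by (apply inDA_Qn; auto).
    rewrite (Series_incr_n b (S n)) by (auto; lia).
    rewrite (Series_incr_n (DA_term lam a c) (S n)) by (auto; lia). simpl pred.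
    assert (E1 : sum_f_R0 b n = 0).
    { apply Rle_antisym. 2: apply cond_pos_sum; intro; apply DA_nonneg.
      rewrite <- (sum_eq_R0 (fun _ => 0) n) by auto. apply sum_Rle. intros k Hk.
      unfold b, DA_term, Qn. replace (Nat.ltb k (S n)) with true by (symmetry; apply Nat.ltb_lt; lia).
      simpl. lra. }
    assert (E2 : (fun k => b (S n + k)%nat) = (fun k => DA_term lam a c (S n + k)%nat)).
    { apply functional_extensionality; intro k. unfold b, DA_term, Qn.
      replace (Nat.ltb (S n + k) (S n)) with false by (symmetry; apply Nat.ltb_ge; lia). auto. }
    rewrite E1, E2. ring.
  - replace (Finite 0) with (Finite (Series (DA_term lam a c) - Series (DA_term lam a c))) by (f_equal; ring).
    apply is_lim_seq_minus'. apply is_lim_seq_const.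
    apply is_lim_seq_ext with (sum_n (DA_term lam a c)). intro; apply sum_n_Reals.
    apply Series_correct. exact H.
Qed.

Lemma sqrt_lim (u : nat -> R) : is_lim_seq u 0 -> is_lim_seq (fun n => sqrt (u n)) 0.
Proof. intros H. rewrite <- sqrt_0. apply is_lim_seq_continuous; auto. apply continuity_pt_sqrt; lra. Qed.

Lemma rpow_lim lam e : is_lim_seq lam p_infty -> e < 0 -> is_lim_seq (fun n => Rpower (lam n) e) 0.
Proof.
  intros H He. apply is_lim_seq_spec in H. apply is_lim_seq_spec. intro eps.
  destruct (H (exp (ln eps / e))) as [N HN]. exists N. intros n Hn.
  specialize (HN n Hn). rewrite Rminus_0_r. unfold Rpower.
  rewrite Rabs_pos_eq by (left; apply exp_pos).
  rewrite <- (exp_ln eps) by apply cond_pos. apply exp_increasing.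
  apply ln_increasing in HN; [|apply exp_pos]. rewrite ln_exp in HN.
  apply Rmult_lt_reg_r with (/ - e). apply Rinv_0_lt_compat; lra.
  replace (e * ln (lam n) * / - e) with (- ln (lam n)) by (field; lra).
  replace (ln eps * / - e) with (- (ln eps / e)) by (field; lra). lra.
Qed.

Lemma ratio_lim lam a b c : stokes_eigen lam -> a < b -> inDA lam b c ->
  (forall n, Qn n c <> ezero) ->
  is_lim_seq (fun n => normDA lam a (Qn n c) / normDA lam b (Qn n c)) 0.
Proof.
  intros [H0 [Hm Hinf]] Hab Hb Hq.
  apply is_lim_seq_le_le with (fun _ => 0) (fun n => sqrt (Rpower (lam n) (2*(a-b)))).
  - intro n. assert (Hp := norm_pos lam b n c Hb (Hq n)). unfold normDA in *. split.
    + apply Rmult_le_pos. apply sqrt_pos. left; apply Rinv_0_lt_compat; auto.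
    + rewrite <- sqrt_div_alt by (apply S_pos; auto). apply sqrt_le_1_alt.
      apply Rmult_le_reg_r with (Series (DA_term lam b (Qn n c))). apply S_pos; auto.
      unfold Rdiv. rewrite Rmult_assoc, Rinv_l by (apply Rgt_not_eq, S_pos; auto).
      rewrite Rmult_1_r. apply S_ratio; auto; lra.
  - apply is_lim_seq_const.
  - apply sqrt_lim, rpow_lim; auto; lra.
Qed.

Lemma norm_scale lam a r c : inDA lam a c -> normDA lam a (escale r c) = Rabs r * normDA lam a c.
Proof. intros H. unfold normDA.
  replace (DA_term lam a (escale r c)) with (fun j => r² * DA_term lam a c j).
  rewrite Series_scal_l, sqrt_mult_alt by apply Rle_0_sqr. rewrite sqrt_Rsqr_abs; auto.
  apply functional_extensionality; intro j. unfold DA_term, escale, Rsqr. ring.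
Qed.

Lemma alpha_le0 (alpha : nat -> R) : (forall k, alpha (S k) < alpha k) -> forall k, alpha k <= alpha 0%nat.
Proof. intros H k; induction k. lra. specialize (H k); lra. Qed.

Lemma inDA_scale lam a r c : inDA lam a c -> inDA lam a (escale r c).
Proof. intros H. unfold inDA.
  replace (DA_term lam a (escale r c)) with (fun j => scal (r²) (DA_term lam a c j)).
  apply (ex_series_scal_l (K:=R_AbsRing) (V:=R_NormedModule)); auto.
  apply functional_extensionality; intro j. unfold DA_term, escale, Rsqr. change scal with Rmult. simpl. ring.
Qed.

Lemma inDA_zero lam a c : inDA lam a c -> inDA lam a ezero.
Proof. intro H. replace ezero with (escale 0 c). apply inDA_scale; auto.
  apply functional_extensionality; intro; unfold escale, ezero; ring. Qed.

Lemma psum_zero G n m : psum G (fun _ => ezero) n m = ezero.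
Proof. induction m; simpl; auto. rewrite IHm. apply functional_extensionality; intro; unfold eadd, escale, ezero; ring. Qed.

Lemma esub_zero x : esub x ezero = x.
Proof. apply functional_extensionality; intro; unfold esub, ezero; ring. Qed.

Lemma ident Gam g n G m : 0 < G ->
  Pn n g = eadd (eadd g (psum Gam (fun _ => ezero) n m)) (escale G (escale (- / G) (Qn n g))).
Proof. intros HG. rewrite psum_zero. apply functional_extensionality; intro j.
  unfold Pn, Qn, eadd, escale, ezero. destruct (Nat.ltb j n). ring. field. lra. Qed.

Theorem mainTheorem5 (lam : nat -> R) (alpha : nat -> R) (g : elt) :
  stokes_eigen lam ->
  (forall k, 0 < alpha k) ->
  (forall k, alpha (S k) < alpha k) ->
  inDA lam (alpha 0%nat) g ->
  (forall n, Qn n g <> ezero) ->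
  (* (a) *)
  (let Gt := fun k n => normDA lam (alpha (k - 1)%nat) (Qn n g) in
   let wt := fun k n => escale (- / Gt k n) (Qn n g) in
   degenerate_expansion (fun k => inDA lam (alpha k)) (fun k => normDA lam (alpha k))
     (fun n => Pn n g) g (fun _ => ezero) wt Gt /\
   (forall k n, (1 <= k)%nat -> (1 <= n)%nat ->
      normDA lam (alpha (k - 1)%nat) (wt k n) = 1)) /\
  (* (b): s in [0, beta], beta = inf_k alpha_k *)
  (forall s : R, 0 <= s -> Rbar_le s (Glb_Rbar (fun x => exists k, x = alpha k)) ->
   let G := fun k n => normDA lam (alpha k) (Qn n g) in
   let w := fun k n => escale (- / G k n) (Qn n g) in
   degenerate_expansion (fun _ => inDA lam s) (fun _ => normDA lam s)
     (fun n => Pn n g) g (fun _ => ezero) w G).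
Proof.
  intros Hst Hapos Hadec Hg Hq.
  pose proof Hst as [H0 [Hm Hinf]].
  assert (Hle := alpha_le0 alpha Hadec).
  assert (HgA : forall a, a <= alpha 0%nat -> inDA lam a g) by (intros; eapply inDA_mono; eauto).
  assert (Hpos : forall a n, a <= alpha 0%nat -> 0 < normDA lam a (Qn n g))
    by (intros; apply norm_pos; auto).
  assert (Hscal : forall a b n, a <= alpha 0%nat -> b <= alpha 0%nat ->
            normDA lam a (escale (- / normDA lam b (Qn n g)) (Qn n g)) =
            normDA lam a (Qn n g) / normDA lam b (Qn n g)).
  { intros a b n Ha Hb. rewrite norm_scale by (apply inDA_Qn; auto).
    rewrite Rabs_Ropp, Rabs_pos_eq by (left; apply Rinv_0_lt_compat; auto).
    unfold Rdiv; ring. }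
  split.
  - intros Gt wt. split.
    + unfold degenerate_expansion. repeat split.
      * exact Hg.
      * intros k _. apply (inDA_zero _ _ g); auto.
      * intros k n _ _. apply inDA_scale, inDA_Qn; auto.
      * intros k n _ _. apply Hpos; auto.
      * unfold Gt. simpl. apply sqrt_lim, tail; auto.
      * intros k Hk. unfold Gt. replace (S k - 1)%nat with k by lia.
        apply ratio_lim; auto. replace k with (S (k-1)) at 1 by lia. apply Hadec.
      * intros k Hk. apply is_lim_seq_ext with
          (fun n => normDA lam (alpha k) (Qn n g) / normDA lam (alpha (k-1)%nat) (Qn n g)).
        intro n. rewrite esub_zero. unfold wt, Gt. rewrite Hscal; auto.
        apply ratio_lim; auto. replace k with (S (k-1)) at 1 by lia. apply Hadec.
      * intros n k _ _. apply ident. apply Hpos; auto.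
      * left; auto.
    + intros k n _ _. unfold wt, Gt. rewrite Hscal by auto. field.
      apply Rgt_not_eq, Hpos; auto.
  - intros s Hs Hglb G w.
    assert (Hsa : forall k, s < alpha k).
    { intro k. destruct (Glb_Rbar_correct (fun x => exists k, x = alpha k)) as [Hlb _].
      assert (Rbar_le s (alpha (S k))).
      { eapply Rbar_le_trans. exact Hglb. apply Hlb. eauto. }
      simpl in H. specialize (Hadec k). lra. }
    assert (Hs0 : s <= alpha 0%nat) by (left; auto).
    unfold degenerate_expansion. repeat split.
    * apply HgA; auto.
    * intros k _. apply (inDA_zero _ _ g); auto.
    * intros k n _ _. apply inDA_scale, inDA_Qn; auto.
    * intros k n _ _. apply Hpos; auto.
    * unfold G. apply sqrt_lim, tail; auto.
    * intros k Hk. unfold G. apply ratio_lim; auto.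
    * intros k Hk. apply is_lim_seq_ext with
          (fun n => normDA lam s (Qn n g) / normDA lam (alpha k) (Qn n g)).
      intro n. rewrite esub_zero. unfold w, G. rewrite Hscal; auto.
      apply ratio_lim; auto.
    * intros n k _ _. apply ident. apply Hpos; auto.
    * left; auto.
Qed.
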